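(* Let $p,q,r$ be distinct sentential variables and let $\pi$ be any weighting function. For each of the following items, there exist a $\pi$-based selection function $\sigma$ and a $\Delta$ model $M$ with selection function $\sigma$ witnessing failure, namely: for items given as a pair ''$\varphi$ does not imply $\psi$'', some world lies in $[\![\varphi]\!]_M\setminus[\![\psi]\!]_M$; for items given as ''$\psi$ is not valid'', some world lies outside $[\![\psi]\!]_M$. (a) $\mathbb{C}(p\vee q,r)$ does not imply $\mathbb{C}(p,r)\wedge\mathbb{C}(q,r)$; (b) $\mathbb{O}(p\wedge q)$ does not imply $\mathbb{O}q$; (c) $\mathbb{O}(p\vee q)\wedge\mathbb{O}(\neg q)$ does not imply $\mathbb{O}p$; (d) $\mathbb{C}(p,q)$ does not imply $\mathbb{C}(p\wedge r,q)$; (e) $\mathbb{C}(p,q)\wedge\mathbb{O}p$ does not imply $\mathbb{O}q$; (f) $\mathbb{O}(p\rightarrow q)$ does not imply $\mathbb{O}(p)\rightarrow\mathbb{O}(q)$; (g) $\mathbb{C}(p,q)\wedge\mathbb{C}(q,r)$ does not imply $\mathbb{C}(p,r)$; (h) $\mathbb{O}p\wedge\mathbb{O}q$ does not imply $\mathbb{O}(p\wedge q)$; (i) $\mathbb{C}(p,q)\wedge\mathbb{C}(p,r)$ does not imply $\mathbb{C}(p,q\wedge r)$; (j) $\mathbb{O}\mathbb{O}p$ does not imply $\mathbb{O}p$; (k) $\mathbb{C}(p,q)\wedge\mathbb{C}(r,q)$ does not imply $\mathbb{C}(p\wedge r,q)$; (l) $\mathbb{O}(\mathbb{O}p\rightarrow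 p)$ is not valid; (m) $\mathbb{O}p$ does not imply $\mathbb{O}(p\vee q)$.
   Context: Fix a set $\mathrm{PROPS}$ of sentential variables (containing $p,q,r$). The language $\mathcal{L}$: every $v\in\mathrm{PROPS}$ is a formula; if $\varphi,\psi$ are formulas so are $\neg\varphi$, $(\varphi\wedge\psi)$, $(\varphi\succeq\psi)$. Abbreviations: $\vee,\rightarrow,\leftrightarrow$ as usual; $\varphi\succ\psi := (\varphi\succeq\psi)\wedge\neg(\psi\succeq\varphi)$; $\top := (v_0\rightarrow v_0)$ for a fixed variable $v_0$. Deontic operators: $\mathbb{C}(\varphi,\psi) := (\varphi\wedge\psi)\succ(\varphi\wedge\neg\psi)$; $\mathbb{O}\psi := \mathbb{C}(\top,\psi)$; $\mathbb{P}\psi:=\neg\mathbb{O}\neg\psi$. A model is $M=(W,\sigma,u,t)$ with $W$ a nonempty set, $\sigma:W\times\{A\subseteq W:A\ne\emptyset\}\to W$ with $\sigma(w,A)\in A$, $u:W\to\mathbb{R}$, and $t:\mathrm{PROPS}\to\mathcal{P}(W)$. Semantics: $[\![v]\!]_M=t(v)$; $[\![\neg\theta]\!]_M=W\setminus[\![\theta]\!]_M$; $[\![\theta\wedge\psi]\!]_M=[\![\theta]\!]_M\cap[\![\psi]\!]_M$; $[\![\theta\succeq\psi]\!]_M=\emptyset$ if either $[\![\theta]\!]_M$ or $[\![\psi]\!]_M$ is empty, otherwise $\{w: u(\sigma(w,[\![\theta]\!]_M))\ge u(\sigma(w,[\![\psi]\!]_M))\}$. A $\Delta$ model is a model with $W=\mathcal{P}(\mathrm{PROPS})$,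 $t(v)=\{w: v\in w\}$ for all $v$, and $\sigma$ $\Delta$-based: for all $w_0$ and nonempty $A$ there is no $w_1\in A$ with $w_0\triangle w_1\subsetneq w_0\triangle\sigma(w_0,A)$ ($\triangle$ = symmetric difference); $u$ is arbitrary. A weighting function is a map $\pi:\mathrm{PROPS}\to(0,\infty)$. For worlds $w_0,w_1$, $d_\pi(w_0,w_1):=\sum_{v\in w_0\triangle w_1}\pi(v)$. A selection function $\sigma$ (on $W=\mathcal{P}(\mathrm{PROPS})$) is $\pi$-based if for every $w\in W$ and nonempty $A\subseteq W$ there is no $w'\in A$ with $d_\pi(w,w')<d_\pi(w,\sigma(w,A))$. (Every $\pi$-based selection function is $\Delta$-based.) *)

(* Defs.v *)
From HB Require Import structures.
From mathcomp Require Import all_boot all_order all_algebra.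
From mathcomp Require Import reals.
Set Implicit Arguments. Unset Strict Implicit. Unset Printing Implicit Defensive.
Import Order.TTheory GRing.Theory Num.Theory.
Local Open Scope ring_scope.

Inductive form (P : Type) : Type :=
  | Var  of P
  | Neg  of form P
  | And  of form P & form P
  | Pref of form P & form P.   (* (phi >= psi) *)

Arguments Var {P}. Arguments Neg {P}. Arguments And {P}. Arguments Pref {P}.

Section Abbrev.
Variable P : Type.
Definition Or  (a b : form P) := Neg (And (Neg a) (Neg b)).
Definition Imp (a b : form P) := Neg (And a (Neg b)).
Definition Strict (a b : form P) := And (Pref a b) (Neg (Pref b a)).
Definition Top (v0 : P) := Imp (Var v0) (Var v0).
Definition Cond (a b : form P) := Strict (And a b) (And a (Neg b)).
Definition Ought (v0 : P) (b : form P) := Cond (Top v0) b.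
Definition Perm (v0 : P) (b : form P) := Neg (Ought v0 (Neg b)).
End Abbrev.

(* Semantics in a model (W, sigma, u, t), W a (finite) set of worlds.
   sigma is total on {set W}; only its values on nonempty sets matter. *)
Section Semantics.
Variables (R : realType) (P : Type) (W : finType).
Variables (sigma : W -> {set W} -> W) (u : W -> R) (t : P -> {set W}).

Fixpoint sem (f : form P) : {set W} :=
  match f with
  | Var v => t v
  | Neg a => ~: sem a
  | And a b => sem a :&: sem b
  | Pref a b =>
      let A := sem a in let B := sem b in
      if (A == set0) || (B == set0) then set0
      else [set w | u (sigma w B) <= u (sigma w A)]
  end.
End Semantics.

Definition is_selection (W : finType) (sigma : W -> {set W} -> W) :=
  forall w (A : {set W}), A != set0 -> sigma w A \in A.

Definition symdiff (T : finType) (A B : {set T}) : {set T} := (A :\: B) :|: (B :\: A).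

Definition world (P : finType) := {set P}.

Definition delta_based (P : finType) (sigma : world P -> {set world P} -> world P) :=
  forall (w0 : world P) (A : {set world P}), A != set0 ->
    ~ exists2 w1, w1 \in A & symdiff w0 w1 \proper symdiff w0 (sigma w0 A).

Definition dpi (R : realType) (P : finType) (pi : P -> R) (w0 w1 : world P) : R :=
  \sum_(v in symdiff w0 w1) pi v.

Definition pi_based (R : realType) (P : finType) (pi : P -> R)
    (sigma : world P -> {set world P} -> world P) :=
  forall (w : world P) (A : {set world P}), A != set0 ->
    ~ exists2 w', w' \in A & dpi pi w w' < dpi pi w (sigma w A).

Definition tDelta (P : finType) (v : P) : {set world P} := [set w : world P | v \in w].

Definition semD (R : realType) (P : finType) (sigma : world P -> {set world P} -> world P)
    (u : world P -> R) (f : form P) : {set world P} :=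
  sem sigma u (@tDelta P) f.

Definition delta_selection (P : finType) (sigma : world P -> {set world P} -> world P) :=
  is_selection sigma /\ delta_based sigma.

Definition fails_implication (R : realType) (P : finType) (pi : P -> R) (phi psi : form P) :=
  exists (sigma : world P -> {set world P} -> world P) (u : world P -> R),
    [/\ delta_selection sigma, pi_based pi sigma &
        exists w, w \in semD sigma u phi /\ w \notin semD sigma u psi].

Definition fails_validity (R : realType) (P : finType) (pi : P -> R) (psi : form P) :=
  exists (sigma : world P -> {set world P} -> world P) (u : world P -> R),
    [/\ delta_selection sigma, pi_based pi sigma &
        exists w, w \notin semD sigma u psi].

(* Main.v *)
Require Import Defs.
From HB Require Import structures.
From mathcomp Require Import all_boot all_order all_algebra.
From mathcomp Require Import reals.
Import Order.TTheory GRing.Theory Num.Theory.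
Local Open Scope ring_scope.
Set Implicit Arguments. Unset Strict Implicit.

Definition sigpi (R : realType) (P : finType) (pi : P -> R) (w : world P)
  (A : {set world P}) : world P :=
  match [pick x in A] with
  | Some x0 => Order.arg_min x0 (fun x => x \in A) (dpi pi w)
  | None => w end.

Lemma sig_spec (R : realType) (P : finType) (pi : P -> R) w (A : {set world P}) :
  A != set0 -> sigpi pi w A \in A /\
    forall y, y \in A -> dpi pi w (sigpi pi w A) <= dpi pi w y.
Proof.
move=> hA; rewrite /sigpi; case: pickP => [x0 Hx0|H0].
  by case: arg_minP => // i Hi Hmin; split.
by case/negP: hA; apply/eqP/setP => x; rewrite inE H0.
Qed.

Lemma in_symdiff (P : finType) (A B : {set P}) v :
  (v \in symdiff A B) = ((v \in A) != (v \in B)).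
Proof. by rewrite /symdiff !inE; case: (v \in A); case: (v \in B). Qed.

Lemma sum_proper (R : realType) (P : finType) (pi : P -> R) (B C : {set P}) :
  (forall v, 0 < pi v) -> B \proper C ->
  \sum_(v in B) pi v < \sum_(v in C) pi v.
Proof.
move=> hpi /properP [hBC [x xC xB]].
rewrite [X in _ < X](big_setID B) /= (setIidPr hBC) ltrDl.
rewrite (bigD1 x) /=; last by rewrite inE xC xB.
apply: (lt_le_trans (hpi x)); rewrite lerDl; apply: sumr_ge0 => i _.
exact: ltW.
Qed.

Lemma sig_pi (R : realType) (P : finType) (pi : P -> R) : pi_based pi (sigpi pi).
Proof.
move=> w A hA [w' w'A]; case: (sig_spec pi w hA) => _ /(_ _ w'A).
by rewrite leNgt => /negP.
Qed.

Lemma sig_sel (R : realType) (P : finType) (pi : P -> R) (hpi : forall v, 0 < pi v) :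
  delta_selection (sigpi pi).
Proof.
split; first by move=> w A hA; case: (sig_spec pi w hA).
move=> w A hA [w1 w1A /(sum_proper hpi)]; rewrite -/(dpi pi w w1) -/(dpi pi w _).
case: (sig_spec pi w hA) => _ /(_ _ w1A).
by rewrite leNgt => /negP.
Qed.

Lemma sig_eq (R : realType) (P : finType) (pi : P -> R) (hpi : forall v, 0 < pi v)
   (w m : world P) (A : {set world P}) :
  m \in A -> (forall x, x \in A -> forall v, (v \in w) != (v \in m) -> (v \in x) = (v \in m)) ->
  sigpi pi w A = m.
Proof.
move=> mA H.
have hA : A != set0 by apply/set0Pn; exists m.
case: (sig_spec pi w hA) => sA smin.
have Hsub : symdiff w m \subset symdiff w (sigpi pi w A).
  apply/subsetP => v; rewrite !in_symdiff => hv.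
  by rewrite (H _ sA v hv).
have Heq : symdiff w m = symdiff w (sigpi pi w A).
  apply/eqP; rewrite eqEproper Hsub /=; apply/negP => hp.
  have := sum_proper hpi hp; rewrite -/(dpi pi w m) -/(dpi pi w _).
  by rewrite ltNge smin.
apply/setP => v; have := congr1 (fun S : {set P} => v \in S) Heq.
rewrite /= !in_symdiff.
by case: (v \in w); case: (v \in m); case: (v \in sigpi pi w A).
Qed.

Section Sem.
End Sem.

Lemma in_semD_var (R : realType) (P : finType) s (u : world P -> R) x v :
  (x \in semD s u (Var v)) = (v \in x).
Proof. by rewrite /semD /= /tDelta inE. Qed.

Lemma in_semD_neg (R : realType) (P : finType) s (u : world P -> R) x a :
  (x \in semD s u (Neg a)) = ~~ (x \in semD s u a).
Proof. by rewrite /semD /= inE. Qed.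

Lemma in_semD_and (R : realType) (P : finType) s (u : world P -> R) x a b :
  (x \in semD s u (And a b)) = (x \in semD s u a) && (x \in semD s u b).
Proof. by rewrite /semD /= inE. Qed.

Lemma in_semD_or (R : realType) (P : finType) s (u : world P -> R) x a b :
  (x \in semD s u (Or a b)) = (x \in semD s u a) || (x \in semD s u b).
Proof. by rewrite /Or in_semD_neg in_semD_and !in_semD_neg negb_and !negbK. Qed.

Lemma in_semD_imp (R : realType) (P : finType) s (u : world P -> R) x a b :
  (x \in semD s u (Imp a b)) = (x \in semD s u a) ==> (x \in semD s u b).
Proof.
rewrite /Imp in_semD_neg in_semD_and in_semD_neg.
by case: (x \in semD s u a); case: (x \in semD s u b).
Qed.

Lemma semD_andT (R : realType) (P : finType) s (u : world P -> R) (v0 : P) b :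
  semD s u (And (Top v0) b) = semD s u b.
Proof.
apply/setP => x; rewrite in_semD_and /Top in_semD_imp.
by case: (x \in semD s u (Var v0)).
Qed.

Lemma in_strict (R : realType) (P : finType) s (u : world P -> R) x a b :
  (x \in semD s u (Strict a b)) =
  [&& semD s u a != set0, semD s u b != set0 & u (s x (semD s u b)) < u (s x (semD s u a))].
Proof.
rewrite /Strict in_semD_and in_semD_neg /semD /=.
case: (sem s u (tDelta (P:=P)) a == set0); case: (sem s u (tDelta (P:=P)) b == set0) => /=;
  rewrite ?inE //.
by case: leP => h; rewrite ?andbF ?andbT // ltW.
Qed.

Lemma in_cond (R : realType) (P : finType) s (u : world P -> R) x a b :
  (x \in semD s u (Cond a b)) =
  [&& semD s u (And a b) != set0, semD s u (And a (Neg b)) != set0 &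
      u (s x (semD s u (And a (Neg b)))) < u (s x (semD s u (And a b)))].
Proof. exact: in_strict. Qed.

Lemma in_O (R : realType) (P : finType) s (u : world P -> R) x (v0 : P) b :
  (x \in semD s u (Ought v0 b)) =
  [&& semD s u b != set0, semD s u (Neg b) != set0 &
      u (s x (semD s u (Neg b))) < u (s x (semD s u b))].
Proof. by rewrite /Ought in_cond !semD_andT. Qed.

Definition mk (P : finType) (p q r : P) (b1 b2 b3 : bool) : world P :=
  [set v | ((v == p) && b1) || ((v == q) && b2) || ((v == r) && b3)].

Lemma mkp (P : finType) (p q r : P) b1 b2 b3 : p != q -> p != r ->
  (p \in mk p q r b1 b2 b3) = b1.
Proof. by move=> hpq hpr; rewrite inE eqxx (negbTE hpq) (negbTE hpr) /= !orbF. Qed.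

Lemma mkq (P : finType) (p q r : P) b1 b2 b3 : p != q -> q != r ->
  (q \in mk p q r b1 b2 b3) = b2.
Proof. by move=> hpq hqr; rewrite inE eqxx eq_sym (negbTE hpq) (negbTE hqr) /= !orbF. Qed.

Lemma mkr (P : finType) (p q r : P) b1 b2 b3 : p != r -> q != r ->
  (r \in mk p q r b1 b2 b3) = b3.
Proof. by move=> hpr hqr; rewrite inE eqxx eq_sym (negbTE hpr) eq_sym (negbTE hqr) /=. Qed.

Lemma sig_mk (R : realType) (P : finType) (pi : P -> R) (hpi : forall v, 0 < pi v)
  (p q r : P) (hpq : p != q) (hpr : p != r) (hqr : q != r) a1 a2 a3 b1 b2 b3
  (A : {set world P}) :
  mk p q r b1 b2 b3 \in A ->
  (forall x, x \in A -> [/\ a1 != b1 -> (p \in x) = b1, a2 != b2 -> (q \in x) = b2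
                           & a3 != b3 -> (r \in x) = b3]) ->
  sigpi pi (mk p q r a1 a2 a3) A = mk p q r b1 b2 b3.
Proof.
move=> Hm H; apply: sig_eq => // x /H [H1 H2 H3] v.
case: (eqVneq v p) => [->|vp]; first by rewrite !mkp.
case: (eqVneq v q) => [->|vq]; first by rewrite !mkq.
case: (eqVneq v r) => [->|vr]; first by rewrite !mkr.
by rewrite !inE (negbTE vp) (negbTE vq) (negbTE vr).
Qed.

Lemma ne0 (P : finType) (A : {set P}) x : x \in A -> A != set0.
Proof. by move=> h; apply/set0Pn; exists x. Qed.

Lemma fi_intro (R : realType) (P : finType) (pi : P -> R) (hpi : forall v, 0 < pi v)
  (p q r : P) (g : bool -> bool -> bool -> nat) a1 a2 a3 phi psi :
  let u := fun x : world P => ((g (p \in x) (q \in x) (r \in x))%:R : R) in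
  (mk p q r a1 a2 a3 \in semD (sigpi pi) u phi) &&
  (mk p q r a1 a2 a3 \notin semD (sigpi pi) u psi) ->
  fails_implication pi phi psi.
Proof.
move=> u /andP [h1 h2]; exists (sigpi pi), u; split.
- exact: sig_sel.
- exact: sig_pi.
- by exists (mk p q r a1 a2 a3).
Qed.

Lemma fv_intro (R : realType) (P : finType) (pi : P -> R) (hpi : forall v, 0 < pi v)
  (p q r : P) (g : bool -> bool -> bool -> nat) a1 a2 a3 psi :
  let u := fun x : world P => ((g (p \in x) (q \in x) (r \in x))%:R : R) in
  (mk p q r a1 a2 a3 \notin semD (sigpi pi) u psi) ->
  fails_validity pi psi.
Proof.
move=> u h2; exists (sigpi pi), u; split.
- exact: sig_sel.
- exact: sig_pi.
- by exists (mk p q r a1 a2 a3).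
Qed.

Arguments semD : simpl never.
Arguments sigpi : simpl never.
Arguments mk : simpl never.

Fact semL_key : unit. Proof. exact: tt. Qed.
Definition semL (R : realType) (P : finType) := locked_with semL_key (@semD R P).
Lemma semDE (R : realType) (P : finType) : @semD R P = @semL R P.
Proof. by rewrite /semL unlock. Qed.

Lemma in_O_L (R : realType) (P : finType) s (u : world P -> R) x (v0 : P) b :
  (x \in semL s u (Ought v0 b)) =
  [&& semL s u b != set0, semL s u (Neg b) != set0 &
      u (s x (semL s u (Neg b))) < u (s x (semL s u b))].
Proof. by rewrite -!semDE in_O. Qed.
Lemma in_cond_L (R : realType) (P : finType) s (u : world P -> R) x a b :
  (x \in semL s u (Cond a b)) =
  [&& semL s u (And a b) != set0, semL s u (And a (Neg b)) != set0 &
      u (s x (semL s u (And a (Neg b)))) < u (s x (semL s u (And a b)))].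
Proof. by rewrite -!semDE in_cond. Qed.
Lemma in_and_L (R : realType) (P : finType) s (u : world P -> R) x a b :
  (x \in semL s u (And a b)) = (x \in semL s u a) && (x \in semL s u b).
Proof. by rewrite -!semDE in_semD_and. Qed.
Lemma in_or_L (R : realType) (P : finType) s (u : world P -> R) x a b :
  (x \in semL s u (Or a b)) = (x \in semL s u a) || (x \in semL s u b).
Proof. by rewrite -!semDE in_semD_or. Qed.
Lemma in_imp_L (R : realType) (P : finType) s (u : world P -> R) x a b :
  (x \in semL s u (Imp a b)) = (x \in semL s u a) ==> (x \in semL s u b).
Proof. by rewrite -!semDE in_semD_imp. Qed.
Lemma in_neg_L (R : realType) (P : finType) s (u : world P -> R) x a :
  (x \in semL s u (Neg a)) = ~~ (x \in semL s u a).
Proof. by rewrite -!semDE in_semD_neg. Qed.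
Lemma in_var_L (R : realType) (P : finType) s (u : world P -> R) x v :
  (x \in semL s u (Var v)) = (v \in x).
Proof. by rewrite -!semDE in_semD_var. Qed.


Ltac simp1 :=
  match goal with
  | |- context [in_mem ?x (@mem _ _ (?F (semL ?s ?u (Ought ?v ?b))))] => rewrite (in_O_L s u x v b)
  | |- context [in_mem ?x (@mem _ _ (?F (semL ?s ?u (Cond ?a ?b))))] => rewrite (in_cond_L s u x a b)
  | |- context [in_mem ?x (@mem _ _ (?F (semL ?s ?u (And ?a ?b))))] => rewrite (in_and_L s u x a b)
  | |- context [in_mem ?x (@mem _ _ (?F (semL ?s ?u (Or ?a ?b))))] => rewrite (in_or_L s u x a b)
  | |- context [in_mem ?x (@mem _ _ (?F (semL ?s ?u (Imp ?a ?b))))] => rewrite (in_imp_L s u x a b)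
  | |- context [in_mem ?x (@mem _ _ (?F (semL ?s ?u (Neg ?a))))] => rewrite (in_neg_L s u x a)
  | |- context [in_mem ?x (@mem _ _ (?F (semL ?s ?u (Var ?v))))] => rewrite (in_var_L s u x v)
  | |- context [in_mem ?x (@mem _ _ (?F (~: ?A)))] => rewrite (in_setC x A)
  end.

Ltac simp_mem hpq hpr hqr :=
  repeat simp1;
  rewrite ?(mkp _ _ _ hpq hpr) ?(mkq _ _ _ hpq hqr) ?(mkr _ _ _ hpr hqr).

Ltac sidetac hpi hpq hpr hqr p q r :=
  apply: (sig_mk hpi hpq hpr hqr);
  [ simp_mem hpq hpr hqr; done
  | let y := fresh "y" in move=> y; simp_mem hpq hpr hqr; rewrite /=;
    case: (p \in y); case: (q \in y); case: (r \in y); by move=> /= Hy; split; move=> H' ].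

Ltac sig1 hpi hpq hpr hqr pi p q r a1 a2 a3 A :=
  let H := fresh "H" in
  first [ have H : sigpi pi (mk p q r a1 a2 a3) A = mk p q r false false false by sidetac hpi hpq hpr hqr p q r
        | have H : sigpi pi (mk p q r a1 a2 a3) A = mk p q r true false false by sidetac hpi hpq hpr hqr p q r
        | have H : sigpi pi (mk p q r a1 a2 a3) A = mk p q r false true false by sidetac hpi hpq hpr hqr p q r
        | have H : sigpi pi (mk p q r a1 a2 a3) A = mk p q r true true false by sidetac hpi hpq hpr hqr p q r
        | have H : sigpi pi (mk p q r a1 a2 a3) A = mk p q r false false true by sidetac hpi hpq hpr hqr p q r
        | have H : sigpi pi (mk p q r a1 a2 a3) A = mk p q r true false true by sidetac hpi hpq hpr hqr p q r
        | have H : sigpi pi (mk p q r a1 a2 a3) A = mk p q r false true true by sidetac hpi hpq hpr hqr p q r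
        | have H : sigpi pi (mk p q r a1 a2 a3) A = mk p q r true true true by sidetac hpi hpq hpr hqr p q r ];
  rewrite H; clear H.

Ltac comp_sig hpi hpq hpr hqr :=
  repeat match goal with |- context [sigpi ?pi (mk ?p ?q ?r ?a1 ?a2 ?a3) ?A] =>
    sig1 hpi hpq hpr hqr pi p q r a1 a2 a3 A end.

Ltac nonempty hpq hpr hqr p q r :=
  repeat match goal with |- context [?A != set0] =>
    let H := fresh "H" in
    first [ have H : A != set0 by (apply: (ne0 (x := mk p q r false false false)); simp_mem hpq hpr hqr)
          | have H : A != set0 by (apply: (ne0 (x := mk p q r true false false)); simp_mem hpq hpr hqr)
          | have H : A != set0 by (apply: (ne0 (x := mk p q r false true false)); simp_mem hpq hpr hqr)
          | have H : A != set0 by (apply: (ne0 (x := mk p q r true true false)); simp_mem hpq hpr hqr)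
          | have H : A != set0 by (apply: (ne0 (x := mk p q r false false true)); simp_mem hpq hpr hqr)
          | have H : A != set0 by (apply: (ne0 (x := mk p q r true false true)); simp_mem hpq hpr hqr)
          | have H : A != set0 by (apply: (ne0 (x := mk p q r false true true)); simp_mem hpq hpr hqr)
          | have H : A != set0 by (apply: (ne0 (x := mk p q r true true true)); simp_mem hpq hpr hqr) ];
    rewrite H; clear H end.

Ltac solve_item hpi hpq hpr hqr p q r :=
  rewrite !semDE; simp_mem hpq hpr hqr; comp_sig hpi hpq hpr hqr; nonempty hpq hpr hqr p q r;
  cbv beta; rewrite ?(mkp _ _ _ hpq hpr) ?(mkq _ _ _ hpq hqr) ?(mkr _ _ _ hpr hqr) ?ltr_nat; done.

Lemma semD_negE (R : realType) (P : finType) s (u : world P -> R) a :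
  semD s u (Neg a) = ~: semD s u a.
Proof. by []. Qed.

Definition gj (a b c : bool) : nat := if a then (if b then 3 else 0) else (if b then 2 else 1).

Lemma semOP (R : realType) (P : finType) (pi : P -> R) (hpi : forall v, 0 < pi v)
  (v0 p q r : P) (hpq : p != q) (hpr : p != r) (hqr : q != r) :
  let u := fun x : world P => ((gj (p \in x) (q \in x) (r \in x))%:R : R) in
  semD (sigpi pi) u (Ought v0 (Var p)) = semD (sigpi pi) u (Var q).
Proof.
move=> u; apply/setP => x; rewrite in_O in_semD_var.
have -> : semD (sigpi pi) u (Var p) != set0.
  by apply: (ne0 (x := mk p q r true false false)); rewrite in_semD_var (mkp _ _ _ hpq hpr).
have -> : semD (sigpi pi) u (Neg (Var p)) != set0.
  by apply: (ne0 (x := mk p q r false false false)); rewrite in_semD_neg in_semD_var (mkp _ _ _ hpq hpr).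
have -> : sigpi pi x (semD (sigpi pi) u (Var p)) = p |: x.
  apply: sig_eq => //; first by rewrite in_semD_var !inE eqxx.
  move=> y; rewrite in_semD_var => hy v; rewrite !inE.
  case: (eqVneq v p) => [->|nvp]; first by rewrite ?eqxx /= hy; case: (p \in x).
  by rewrite /= eqxx.
have -> : sigpi pi x (semD (sigpi pi) u (Neg (Var p))) = x :\ p.
  apply: sig_eq => //; first by rewrite in_semD_neg in_semD_var !inE eqxx.
  move=> y; rewrite in_semD_neg in_semD_var => hy v; rewrite !inE.
  case: (eqVneq v p) => [->|nvp]; first by rewrite /= (negbTE hy); case: (p \in x).
  by rewrite /= eqxx.
have hqp : (q == p) = false by rewrite eq_sym (negbTE hpq).
have hrp : (r == p) = false by rewrite eq_sym (negbTE hpr).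
rewrite /u /= !inE eqxx hqp hrp /=.
by rewrite ltr_nat; case: (q \in x); case: (r \in x).
Qed.


Lemma item_a (R : realType) (PROPS : finType) (v0 p q r : PROPS) (pi : PROPS -> R) :
  p != q -> p != r -> q != r -> (forall v, 0 < pi v) ->
  fails_implication pi (Cond (Or (Var p) (Var q)) (Var r)) (And (Cond (Var p) (Var r)) (Cond (Var q) (Var r))).
Proof.
move=> hpq hpr hqr hpi.
apply: (fi_intro hpi (p:=p) (q:=q) (r:=r) (g := fun a b c => if a && ~~ b && c then 1%N else 0%N)
   (a1 := true) (a2 := false) (a3 := false)); solve_item hpi hpq hpr hqr p q r.
Qed.

Lemma item_b (R : realType) (PROPS : finType) (v0 p q r : PROPS) (pi : PROPS -> R) :
  p != q -> p != r -> q != r -> (forall v, 0 < pi v) ->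
  fails_implication pi (Ought v0 (And (Var p) (Var q))) (Ought v0 (Var q)).
Proof.
move=> hpq hpr hqr hpi.
apply: (fi_intro hpi (p:=p) (q:=q) (r:=r) (g := fun a b c => if a && b then 1%N else 0%N)
   (a1 := false) (a2 := false) (a3 := false)); solve_item hpi hpq hpr hqr p q r.
Qed.

Lemma item_c (R : realType) (PROPS : finType) (v0 p q r : PROPS) (pi : PROPS -> R) :
  p != q -> p != r -> q != r -> (forall v, 0 < pi v) ->
  fails_implication pi (And (Ought v0 (Or (Var p) (Var q))) (Ought v0 (Neg (Var q)))) (Ought v0 (Var p)).
Proof.
move=> hpq hpr hqr hpi.
apply: (fi_intro hpi (p:=p) (q:=q) (r:=r) (g := fun a b c => if a then (if b then 1%N else 2%N) else (if b then 1%N else 0%N))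
   (a1 := true) (a2 := true) (a3 := false)); solve_item hpi hpq hpr hqr p q r.
Qed.

Lemma item_d (R : realType) (PROPS : finType) (v0 p q r : PROPS) (pi : PROPS -> R) :
  p != q -> p != r -> q != r -> (forall v, 0 < pi v) ->
  fails_implication pi (Cond (Var p) (Var q)) (Cond (And (Var p) (Var r)) (Var q)).
Proof.
move=> hpq hpr hqr hpi.
apply: (fi_intro hpi (p:=p) (q:=q) (r:=r) (g := fun a b c => if a && b && ~~ c then 1%N else 0%N)
   (a1 := false) (a2 := false) (a3 := false)); solve_item hpi hpq hpr hqr p q r.
Qed.

Lemma item_e (R : realType) (PROPS : finType) (v0 p q r : PROPS) (pi : PROPS -> R) :
  p != q -> p != r -> q != r -> (forall v, 0 < pi v) ->
  fails_implication pi (And (Cond (Var p) (Var q)) (Ought v0 (Var p))) (Ought v0 (Var q)).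
Proof.
move=> hpq hpr hqr hpi.
apply: (fi_intro hpi (p:=p) (q:=q) (r:=r) (g := fun a b c => if a then (if b then 2%N else 1%N) else 0%N)
   (a1 := false) (a2 := false) (a3 := false)); solve_item hpi hpq hpr hqr p q r.
Qed.

Lemma item_f (R : realType) (PROPS : finType) (v0 p q r : PROPS) (pi : PROPS -> R) :
  p != q -> p != r -> q != r -> (forall v, 0 < pi v) ->
  fails_implication pi (Ought v0 (Imp (Var p) (Var q))) (Imp (Ought v0 (Var p)) (Ought v0 (Var q))).
Proof.
move=> hpq hpr hqr hpi.
apply: (fi_intro hpi (p:=p) (q:=q) (r:=r) (g := fun a b c => if a then (if b then 3%N else 0%N) else 1%N)
   (a1 := false) (a2 := true) (a3 := false)); solve_item hpi hpq hpr hqr p q r.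
Qed.

Lemma item_g (R : realType) (PROPS : finType) (v0 p q r : PROPS) (pi : PROPS -> R) :
  p != q -> p != r -> q != r -> (forall v, 0 < pi v) ->
  fails_implication pi (And (Cond (Var p) (Var q)) (Cond (Var q) (Var r))) (Cond (Var p) (Var r)).
Proof.
move=> hpq hpr hqr hpi.
apply: (fi_intro hpi (p:=p) (q:=q) (r:=r) (g := fun a b c => if (a && b && ~~ c) || (~~ a && b && c) then 1%N else 0%N)
   (a1 := false) (a2 := false) (a3 := false)); solve_item hpi hpq hpr hqr p q r.
Qed.

Lemma item_h (R : realType) (PROPS : finType) (v0 p q r : PROPS) (pi : PROPS -> R) :
  p != q -> p != r -> q != r -> (forall v, 0 < pi v) ->
  fails_implication pi (And (Ought v0 (Var p)) (Ought v0 (Var q))) (Ought v0 (And (Var p) (Var q))).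
Proof.
move=> hpq hpr hqr hpi.
apply: (fi_intro hpi (p:=p) (q:=q) (r:=r) (g := fun a b c => if a != b then 1%N else 0%N)
   (a1 := false) (a2 := false) (a3 := false)); solve_item hpi hpq hpr hqr p q r.
Qed.

Lemma item_i (R : realType) (PROPS : finType) (v0 p q r : PROPS) (pi : PROPS -> R) :
  p != q -> p != r -> q != r -> (forall v, 0 < pi v) ->
  fails_implication pi (And (Cond (Var p) (Var q)) (Cond (Var p) (Var r))) (Cond (Var p) (And (Var q) (Var r))).
Proof.
move=> hpq hpr hqr hpi.
apply: (fi_intro hpi (p:=p) (q:=q) (r:=r) (g := fun a b c => if a && (b != c) then 1%N else 0%N)
   (a1 := false) (a2 := false) (a3 := false)); solve_item hpi hpq hpr hqr p q r.
Qed.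

Lemma item_k (R : realType) (PROPS : finType) (v0 p q r : PROPS) (pi : PROPS -> R) :
  p != q -> p != r -> q != r -> (forall v, 0 < pi v) ->
  fails_implication pi (And (Cond (Var p) (Var q)) (Cond (Var r) (Var q))) (Cond (And (Var p) (Var r)) (Var q)).
Proof.
move=> hpq hpr hqr hpi.
apply: (fi_intro hpi (p:=p) (q:=q) (r:=r) (g := fun a b c => if (a && b && ~~ c) || (~~ a && b && c) then 1%N else 0%N)
   (a1 := false) (a2 := false) (a3 := false)); solve_item hpi hpq hpr hqr p q r.
Qed.

Lemma item_m (R : realType) (PROPS : finType) (v0 p q r : PROPS) (pi : PROPS -> R) :
  p != q -> p != r -> q != r -> (forall v, 0 < pi v) ->
  fails_implication pi (Ought v0 (Var p)) (Ought v0 (Or (Var p) (Var q))).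
Proof.
move=> hpq hpr hqr hpi.
apply: (fi_intro hpi (p:=p) (q:=q) (r:=r) (g := fun a b c => if a && b then 1%N else 0%N)
   (a1 := false) (a2 := true) (a3 := false)); solve_item hpi hpq hpr hqr p q r.
Qed.

Lemma item_j (R : realType) (PROPS : finType) (v0 p q r : PROPS) (pi : PROPS -> R) :
  p != q -> p != r -> q != r -> (forall v, 0 < pi v) ->
  fails_implication pi (Ought v0 (Ought v0 (Var p))) (Ought v0 (Var p)).
Proof.
move=> hpq hpr hqr hpi.
apply: (fi_intro hpi (p:=p) (q:=q) (r:=r) (g := gj)
   (a1 := false) (a2 := false) (a3 := false)).
rewrite [X in X && _]in_O semD_negE (@semOP _ _ pi hpi v0 p q r hpq hpr hqr) -semD_negE.
rewrite /gj; solve_item hpi hpq hpr hqr p q r.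
Qed.

Lemma item_l (R : realType) (PROPS : finType) (v0 p q r : PROPS) (pi : PROPS -> R) :
  p != q -> p != r -> q != r -> (forall v, 0 < pi v) ->
  fails_validity pi (Ought v0 (Imp (Ought v0 (Var p)) (Var p))).
Proof.
move=> hpq hpr hqr hpi.
apply: (fv_intro hpi (p:=p) (q:=q) (r:=r) (g := fun a b c => 0%N)
   (a1 := false) (a2 := false) (a3 := false)).
by rewrite in_O ltxx !andbF.
Qed.

Unset Implicit Arguments.

Theorem proposition5p5 (R : realType) (PROPS : finType) (v0 p q r : PROPS)
    (pi : PROPS -> R) :
  p != q -> p != r -> q != r -> (forall v, 0 < pi v) ->
  let C := @Cond PROPS in let O := Ought v0 in
  let P := Var p in let Q := Var q in let Rv := Var r in
  fails_implication pi (C (Or P Q) Rv) (And (C P Rv) (C Q Rv)) /\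
      fails_implication pi (O (And P Q)) (O Q) /\
      fails_implication pi (And (O (Or P Q)) (O (Neg Q))) (O P) /\
      fails_implication pi (C P Q) (C (And P Rv) Q) /\
      fails_implication pi (And (C P Q) (O P)) (O Q) /\
      fails_implication pi (O (Imp P Q)) (Imp (O P) (O Q)) /\
      fails_implication pi (And (C P Q) (C Q Rv)) (C P Rv) /\
      fails_implication pi (And (O P) (O Q)) (O (And P Q)) /\
      fails_implication pi (And (C P Q) (C P Rv)) (C P (And Q Rv)) /\
      fails_implication pi (O (O P)) (O P) /\
      fails_implication pi (And (C P Q) (C Rv Q)) (C (And P Rv) Q) /\
      fails_validity pi (O (Imp (O P) P)) /\
      fails_implication pi (O P) (O (Or P Q)).
Proof.
move=> hpq hpr hqr hpi C O P Q Rv; rewrite {}/C {}/O {}/P {}/Q {}/Rv.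
split; first exact: (item_a v0 hpq hpr hqr hpi).
split; first exact: (item_b v0 hpq hpr hqr hpi).
split; first exact: (item_c v0 hpq hpr hqr hpi).
split; first exact: (item_d v0 hpq hpr hqr hpi).
split; first exact: (item_e v0 hpq hpr hqr hpi).
split; first exact: (item_f v0 hpq hpr hqr hpi).
split; first exact: (item_g v0 hpq hpr hqr hpi).
split; first exact: (item_h v0 hpq hpr hqr hpi).
split; first exact: (item_i v0 hpq hpr hqr hpi).
split; first exact: (item_j v0 hpq hpr hqr hpi).
split; first exact: (item_k v0 hpq hpr hqr hpi).
split; first exact: (item_l v0 hpq hpr hqr hpi).
exact: (item_m v0 hpq hpr hqr hpi).
Qed.
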